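(* Let \[ W(\eta,\omega_G)=\tfrac12(\omega_G-\bar\omega_G)^TM(\omega_G-\bar\omega_G)+\mathbf{1}^T\Gamma\cos(\eta)-\mathbf{1}^T\Gamma\cos(\bar\eta)-(\Gamma\sin(\bar\eta))^T(\eta-\bar\eta). \] Then the time derivative of $W$ along a solution $(\eta,\omega_G)$ of $\dot\eta=B_S^T(\eta)\omega_G$, $M\dot\omega_G=-A\omega_G-B_G\Gamma\sin(\eta)+u$, initialized in a neighborhood of $(\bar\eta,\bar\omega_G)$ with $B_L\Gamma\sin(\eta(0))=B_L\Gamma\sin(\bar\eta)$, satisfies \[ \dot W=-(\omega_G-\bar\omega_G)^TA(\omega_G-\bar\omega_G)+(\omega_G-\bar\omega_G)^T(u-\bar u) \] on the interval of definition of the solution.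
   Context: A connected undirected graph with $n$ nodes and $m$ edges, nodes partitioned into $n_g$ generator and $n_\ell$ load nodes; $B$ is an incidence matrix partitioned row-wise as $B=\begin{bmatrix}B_G^T & B_L^T\end{bmatrix}^T$. $\Gamma=\mathrm{diag}(\gamma_k)$ is positive definite, $M,A$ positive definite diagonal. $\sin,\cos$ act elementwise, $\Omega=(-\frac{\pi}{2},\frac{\pi}{2})^m$, $\Gamma'(\eta)=\Gamma\,\mathrm{diag}(\cos(\eta_k))$, $B_S(\eta)=B_G\big(I-\Gamma'(\eta)B_L^T(B_L\Gamma'(\eta)B_L^T)^{-1}B_L\big)$, and $\mathbf{1}$ is the all-ones vector. $\bar u$ is a constant input and $(\bar\eta,\bar\omega_G)$ with $\bar\eta\in\Omega\cap\operatorname{im}B^T$, $\bar\omega_G=\mathbf{1}\omega^0$ ($\omega^0\in\mathbb{R}$) satisfies $0=B_S^T(\bar\eta)\bar\omega_G$ and $0=-A\bar\omega_G-B_G\Gamma\sin(\bar\eta)+\bar u$. *)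

(* Defs.v *)
From HB Require Import structures.
From mathcomp Require Import all_boot all_order all_algebra.
From mathcomp Require Import all_classical all_reals all_analysis.
Set Implicit Arguments. Unset Strict Implicit. Unset Printing Implicit Defensive.
Import Order.TTheory GRing.Theory Num.Theory.
Import numFieldNormedType.Exports.
Local Open Scope ring_scope.
Local Open Scope classical_set_scope.

Definition incidence_mx (R : nzRingType) (n m : nat) (B : 'M[R]_(n, m)) : Prop :=
  forall k : 'I_m, exists i j : 'I_n, [/\ i != j, B i k = 1, B j k = -1 &
    forall l : 'I_n, l != i -> l != j -> B l k = 0].

Definition inc_adj (R : nzRingType) (n m : nat) (B : 'M[R]_(n, m)) : rel 'I_n :=
  fun i j => (i != j) && [exists k : 'I_m, (B i k != 0) && (B j k != 0)].

Definition graph_connected (R : nzRingType) (n m : nat) (B : 'M[R]_(n, m)) : Prop :=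
  forall i j : 'I_n, connect (inc_adj B) i j.

Definition pos_diag_mx (R : numDomainType) (n : nat) (D : 'M[R]_n) : Prop :=
  is_diag_mx D /\ forall i, 0 < D i i.

Definition vsin (R : realType) (m : nat) (x : 'cV[R]_m) : 'cV[R]_m := map_mx sin x.
Definition vcos (R : realType) (m : nat) (x : 'cV[R]_m) : 'cV[R]_m := map_mx cos x.

Definition in_Omega (R : realType) (m : nat) (x : 'cV[R]_m) : Prop :=
  forall k, - (pi / 2) < x k 0 < pi / 2.

Definition Gammap (R : realType) (m : nat) (Gamma : 'M[R]_m) (eta : 'cV[R]_m)
  : 'M[R]_m := Gamma *m diag_mx (vcos eta)^T.

Definition B_S (R : realType) (ng nl m : nat) (BG : 'M[R]_(ng, m))
  (BL : 'M[R]_(nl, m)) (Gamma : 'M[R]_m) (eta : 'cV[R]_m) : 'M[R]_(ng, m) :=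
  let Gp := Gammap Gamma eta in
  BG *m (1%:M - Gp *m BL^T *m invmx (BL *m Gp *m BL^T) *m BL).

Definition ones (R : nzRingType) (k : nat) : 'cV[R]_k := const_mx 1.

Definition sc (R : nzRingType) (x : 'M[R]_1) : R := x 0 0.

Definition Wfun (R : realType) (ng m : nat) (M : 'M[R]_ng) (Gamma : 'M[R]_m) 
  (etab : 'cV[R]_m) (omb : 'cV[R]_ng) (eta : 'cV[R]_m) (om : 'cV[R]_ng) : R :=
  2^-1 * sc ((om - omb)^T *m M *m (om - omb))
  - sc ((ones R m)^T *m Gamma *m vcos eta)
  + sc ((ones R m)^T *m Gamma *m vcos etab)
  - sc ((Gamma *m vsin etab)^T *m (eta - etab)).

(* Main.v *)
Require Import Defs.
From HB Require Import structures.
From mathcomp Require Import all_boot all_order all_algebra.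
From mathcomp Require Import all_classical all_reals all_analysis.
From mathcomp Require Import ring lra.
Import Order.TTheory GRing.Theory Num.Theory.
Import numFieldNormedType.Exports.
Set Implicit Arguments. Unset Strict Implicit.
Local Open Scope ring_scope.
Local Open Scope classical_set_scope.

Section Dent.
Variable R : realType.

Definition Dent a b (f : R -> 'M[R]_(a,b)) (df : 'M[R]_(a,b)) (t : R) :=
  forall i j, is_derive t (1:R) (fun s => f s i j) (df i j).

Arguments Dent {a b}.

Lemma Dent_of a b (f : R -> 'M[R]_(a,b)) df t : is_derive t (1:R) f df -> Dent f df t.
Proof.
move=> H i j; have d : derivable f t 1 by case: H.
have E := derive_mx d; rewrite derive_val in E; rewrite E mxE.
by apply: derivableP; move/derivable_mxP: d; apply.
Qed.

Lemma Dent_cst a b (C : 'M[R]_(a,b)) t : Dent (fun _ => C) 0 t.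
Proof. by move=> i j; rewrite mxE; exact: is_derive_cst. Qed.

Lemma Dent_add a b (f g : R -> 'M[R]_(a,b)) df dg t :
  Dent f df t -> Dent g dg t -> Dent (fun s => f s + g s) (df + dg) t.
Proof.
move=> Hf Hg i j; rewrite mxE.
have -> : (fun s => (f s + g s) i j) = (fun s => f s i j) + (fun s => g s i j).
  by apply/funext => s; rewrite !mxE.
exact: is_deriveD.
Qed.

Lemma Dent_opp a b (f : R -> 'M[R]_(a,b)) df t :
  Dent f df t -> Dent (fun s => - f s) (- df) t.
Proof.
move=> Hf i j; rewrite mxE.
have -> : (fun s => (- f s) i j) = - (fun s => f s i j).
  by apply/funext => s; rewrite !mxE.
exact: is_deriveN.
Qed.

Lemma Dent_sub a b (f g : R -> 'M[R]_(a,b)) df dg t :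
  Dent f df t -> Dent g dg t -> Dent (fun s => f s - g s) (df - dg) t.
Proof. by move=> Hf Hg; apply: Dent_add => //; apply: Dent_opp. Qed.

Lemma Dent_tr a b (f : R -> 'M[R]_(a,b)) df t :
  Dent f df t -> Dent (fun s => (f s)^T) df^T t.
Proof.
move=> Hf i j; rewrite mxE.
have -> : (fun s => (f s)^T i j) = (fun s => f s j i).
  by apply/funext => s; rewrite !mxE.
exact: Hf.
Qed.

Lemma Dent_mul a b c (f : R -> 'M[R]_(a,b)) (g : R -> 'M[R]_(b,c)) df dg t :
  Dent f df t -> Dent g dg t ->
  Dent (fun s => f s *m g s) (df *m g t + f t *m dg) t.
Proof.
move=> Hf Hg i j.
have -> : (fun s => (f s *m g s) i j) =
   \sum_(k < b) ((fun s => f s i k) * (fun s => g s k j)).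
  by apply/funext => s; rewrite fct_sumE !mxE.
have -> : (df *m g t + f t *m dg) i j =
   \sum_(k < b) ((f t i k) *: (dg k j) + (g t k j) *: (df i k)).
  rewrite !mxE -!big_split /=; apply: eq_bigr => k _.
  rewrite /GRing.scale /=; ring.
apply: is_derive_sum => k; exact: is_deriveM.
Qed.

Lemma Dent_map a b (phi dphi : R -> R) (f : R -> 'M[R]_(a,b)) df t :
  (forall x, is_derive x (1:R) phi (dphi x)) -> Dent f df t ->
  Dent (fun s => map_mx phi (f s))
    (\matrix_(i, j) (dphi (f t i j) * df i j)) t.
Proof.
move=> Hp Hf i j; rewrite mxE.
have -> : (fun s => map_mx phi (f s) i j) = phi \o (fun s => f s i j).
  by apply/funext => s; rewrite !mxE.
exact: is_derive1_comp.
Qed.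

Lemma Dent_scale a b (k : R) (f : R -> 'M[R]_(a,b)) df t :
  Dent f df t -> Dent (fun s => k *: f s) (k *: df) t.
Proof.
move=> Hf i j; rewrite mxE.
have -> : (fun s => (k *: f s) i j) = k \*: (fun s => f s i j).
  by apply/funext => s; rewrite !mxE.
exact: is_deriveZ.
Qed.

Lemma Dent_eq a b (f : R -> 'M[R]_(a,b)) df df' t :
  Dent f df t -> df = df' -> Dent f df' t.
Proof. by move=> ? <-. Qed.

Lemma scD (A B : 'M[R]_1) : sc (A + B) = sc A + sc B. Proof. by rewrite /sc mxE. Qed.
Lemma scN (A : 'M[R]_1) : sc (- A) = - sc A. Proof. by rewrite /sc mxE. Qed.
Lemma scB (A B : 'M[R]_1) : sc (A - B) = sc A - sc B. Proof. by rewrite scD scN. Qed.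
Lemma scZ k (A : 'M[R]_1) : sc (k *: A) = k * sc A. Proof. by rewrite /sc mxE. Qed.
Lemma scT (A : 'M[R]_1) : sc (A^T) = sc A. Proof. by rewrite /sc mxE. Qed.
Lemma sc0 : sc (0 : 'M[R]_1) = 0. Proof. by rewrite /sc mxE. Qed.

Lemma cst_on_interval (I : set R) (f : R -> R) :
  is_interval I -> (forall s, I s -> is_derive s (1:R) f 0) ->
  forall a b, I a -> I b -> f a = f b.
Proof.
move=> HI Hd.
suff H : forall a b, a <= b -> I a -> I b -> f a = f b.
  move=> a b Ia Ib; case: (leP a b) => ab; first exact: H.
  by symmetry; apply: H => //; exact: ltW.
move=> a b ab Ia Ib.
have Iab : forall x, x \in `[a, b]%R -> I x.
  by move=> x; rewrite in_itv /= => /andP[ax xb]; apply: (HI a b) => //; rewrite ax xb.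
have Hder : {in `[a, b]%R, forall x, derivable f x 1}.
  by move=> x hx; case: (Hd x (Iab x hx)).
have [c _ ] := @MVT_segment R f (fun _ => 0) a b ab
  (fun x hx => Hd x (Iab x (subset_itv_oo_cc hx)))
  (derivable_within_continuous Hder).
by rewrite mul0r => /eqP; rewrite subr_eq0 => /eqP.
Qed.

End Dent.

Section Graph.
Variable R : realType.

Lemma ones_B n m (B : 'M[R]_(n, m)) : incidence_mx B -> (ones R n)^T *m B = 0.
Proof.
move=> Hinc; apply/matrixP => i k; rewrite !mxE.
case: (Hinc k) => p [q [pq Bp Bq Bo]].
rewrite (bigD1 p) //= (bigD1 q) /=; last by rewrite eq_sym.
rewrite big1 ?addr0; last first.
  by move=> l /andP[lp lq]; rewrite Bo // mulr0.
by rewrite !mxE Bp Bq !mul1r subrr.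
Qed.

Lemma conn_const n m (B : 'M[R]_(n, m)) (y : 'rV[R]_n) :
  incidence_mx B -> graph_connected B -> y *m B = 0 ->
  forall i j, y 0 i = y 0 j.
Proof.
move=> Hinc Hconn Hy.
have step : forall i j, inc_adj B i j -> y 0 i = y 0 j.
  move=> i j /andP[ij /existsP[k /andP[Bi Bj]]].
  case: (Hinc k) => p [q [pq Bp Bq Bo]].
  have ypq : y 0 p = y 0 q.
    have := congr1 (fun M : 'M[R]_(1,m) => M 0 k) Hy; rewrite !mxE.
    rewrite (bigD1 p) //= (bigD1 q) /=; last by rewrite eq_sym.
    rewrite big1 ?addr0; last first.
      by move=> l /andP[lp lq]; rewrite Bo // mulr0.
    rewrite Bp Bq mulr1 mulrN1 => /eqP; rewrite subr_eq0 => /eqP //.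
  have Hi : (i == p) || (i == q).
    apply/negPn/negP => /norP[ip iq]; by rewrite Bo // eqxx in Bi.
  have Hj : (j == p) || (j == q).
    apply/negPn/negP => /norP[jp jq]; by rewrite Bo // eqxx in Bj.
  case/orP: Hi => /eqP Ei; case/orP: Hj => /eqP Ej; rewrite Ei Ej.
  - by rewrite Ei Ej eqxx in ij.
  - exact: ypq.
  - by rewrite ypq.
  - by rewrite Ei Ej eqxx in ij.
move=> i j; have /connectP [p Hp ->] := Hconn i j.
elim: p i Hp => [|a p IH] i //= /andP[Hia Hp].
by rewrite (step _ _ Hia) IH.
Qed.

Lemma X_unit ng nl m (B : 'M[R]_(ng + nl, m)) (d : 'rV[R]_m) :
  incidence_mx B -> graph_connected B -> (0 < ng)%N ->
  (forall k, 0 < d 0 k) ->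
  (dsubmx B *m diag_mx d *m (dsubmx B)^T) \in unitmx.
Proof.
move=> Hinc Hconn ng0 dpos.
rewrite -row_free_unit; apply: inj_row_free => z Hz.
set w := z *m dsubmx B.
have Hw : w = 0.
  have H0 : (w *m diag_mx d *m w^T) 0 0 = 0.
    rewrite !mulmxA in Hz.
    by rewrite /w trmx_mul !mulmxA Hz !mul0mx mxE.
  rewrite mul_mx_diag mxE in H0.
  have Hk := psumr_eq0P _ H0.
  apply/matrixP => i k; rewrite [RHS]mxE (ord1 i).
  have : (\matrix_(i, j) (w i j * d 0 j)) 0 k * w^T k 0 = 0.
    apply: Hk => //= l _; rewrite !mxE -mulrA mulrC -mulrA.
    by apply: mulr_ge0; [exact: ltW | rewrite -expr2 sqr_ge0].
  rewrite !mxE mulrC mulrA => /eqP; rewrite mulf_eq0 (gt_eqF (dpos k)) orbF.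
  by rewrite -expr2 sqrf_eq0 => /eqP.
set y : 'rV[R]_(ng + nl) := row_mx 0 z.
have Hy : y *m B = 0.
  by rewrite -(vsubmxK B) mul_row_col mul0mx add0r.
have Hc := @conn_const _ _ B y Hinc Hconn Hy.
apply/matrixP => i l; rewrite [RHS]mxE (ord1 i).
have -> : z 0 l = y 0 (rshift ng l) by rewrite /y row_mxEr.
rewrite (Hc _ (lshift nl (Ordinal ng0))) /y row_mxEl mxE //.
Qed.

End Graph.

Lemma key1 (R : realType) ng nl m (BG : 'M[R]_(ng,m)) (BL : 'M[R]_(nl,m))
  (Gamma : 'M[R]_m) eta (om : 'cV[R]_ng) :
  (Gammap Gamma eta)^T = Gammap Gamma eta ->
  (BL *m Gammap Gamma eta *m BL^T) \in unitmx ->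
  BL *m Gammap Gamma eta *m ((B_S BG BL Gamma eta)^T *m om) = 0.
Proof.
rewrite /B_S /=; move: (Gammap Gamma eta) => Gp.
set X := BL *m Gp *m BL^T.
move=> HGp HX.
have HXt : X^T = X by rewrite /X !trmx_mul trmxK HGp mulmxA.
rewrite trmx_mul mulmxA mulmxA.
suff -> : BL *m Gp *m (1%:M - Gp *m BL^T *m invmx X *m BL)^T = 0 by rewrite !mul0mx.
rewrite linearB /= trmx1 !trmx_mul trmxK HGp trmx_inv HXt.
rewrite mulmxBr mulmx1 !mulmxA -/X mulmxV // mul1mx subrr //.
Qed.

Theorem proposition5 (R : realType) (ng nl m : nat)
  (B : 'M[R]_(ng + nl, m)) (Gamma : 'M[R]_m) (M A : 'M[R]_ng)
  (ubar : 'cV[R]_ng) (etab : 'cV[R]_m) (om0 : R)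
  (I : set R) (eta : R -> 'cV[R]_m) (om : R -> 'cV[R]_ng)
  (u : R -> 'cV[R]_ng) :
  incidence_mx B -> graph_connected B ->
  pos_diag_mx Gamma -> pos_diag_mx M -> pos_diag_mx A ->
  let BG := usubmx B in
  let BL := dsubmx B in
  let omb := om0 *: ones R ng in
  in_Omega etab -> (exists v : 'cV[R]_(ng + nl), etab = B^T *m v) ->
  (B_S BG BL Gamma etab)^T *m omb = 0 ->
  0 = - (A *m omb) - BG *m Gamma *m vsin etab + ubar ->
  open I -> is_interval I -> I 0 ->
  (forall t, I t -> in_Omega (eta t)) ->
  (forall t, I t -> is_derive t 1 eta ((B_S BG BL Gamma (eta t))^T *m om t)) ->
  (forall t, I t -> exists2 dom : 'cV[R]_ng, is_derive t 1 om dom &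
       M *m dom = - (A *m om t) - BG *m Gamma *m vsin (eta t) + u t) ->
  BL *m Gamma *m vsin (eta 0) = BL *m Gamma *m vsin etab ->
  forall t, I t ->
    is_derive t 1 (fun s => Wfun M Gamma etab omb (eta s) (om s))
      (- sc ((om t - omb)^T *m A *m (om t - omb))
       + sc ((om t - omb)^T *m (u t - ubar))).
Proof.
move=> Hinc Hconn HG HM HA BG BL omb HOmb Hv HBSb Hub Iop Iint I0 HOm Heta Hom
  Hinit t It.
have [g Eg] : exists g, Gamma = diag_mx g by apply/diag_mxP; case: HG.
have gpos : forall k, 0 < g 0 k.
  by move=> k; have := HG.2 k; rewrite Eg mxE eqxx mulr1n.
have [mm Em] : exists mm, M = diag_mx mm by apply/diag_mxP; case: HM.
have Gpdiag : forall e, Gammap Gamma e = diag_mx (\row_j (g 0 j * (vcos e)^T 0 j)).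
  by move=> e; rewrite /Gammap Eg mulmx_diag.
have GpT : forall e, (Gammap Gamma e)^T = Gammap Gamma e.
  by move=> e; rewrite Gpdiag tr_diag_mx.
have GCm : forall (e : 'cV[R]_m) (D : 'cV[R]_m),
    Gamma *m (\matrix_(i, j) (cos (e i j) * D i j)) = Gammap Gamma e *m D.
  move=> e D; rewrite Gpdiag Eg !mul_diag_mx; apply/matrixP => i j.
  by rewrite !mxE (ord1 j) mulrA.
have Dinv : forall s, I s -> Dent (fun r => BL *m Gamma *m vsin (eta r)) 0 s.
  move=> s Is.
  have H1 := Dent_map (fun x => @is_derive_sin R x) (Dent_of (Heta s Is)).
  have H2 := Dent_mul (Dent_cst (BL *m Gamma) s) H1.
  apply: (Dent_eq H2).
  rewrite mul0mx add0r -mulmxA GCm mulmxA.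
  case: (posnP ng) => ng0.
    have -> : om s = 0 by apply/matrixP => -[k hk] j; exfalso; move: hk; by rewrite ng0.
    by rewrite !mulmx0.
  apply: key1; first exact: GpT.
  rewrite Gpdiag; apply: X_unit => // k; rewrite mxE.
  apply: mulr_gt0 => //; rewrite !mxE; apply: cos_gt0_pihalf; exact: HOm.
have Hinv : forall s, I s -> BL *m Gamma *m vsin (eta s) = BL *m Gamma *m vsin etab.
  move=> s Is; rewrite -Hinit; apply/matrixP => i j.
  apply: (@cst_on_interval R I (fun r => (BL *m Gamma *m vsin (eta r)) i j)) => //.
  move=> r Ir; have := Dinv r Ir i j; by rewrite mxE.
have scE : forall X : 'M[R]_1, X 0 0 = sc X by [].
have [dom Hdom HMdom] := Hom t It.
set D := (B_S BG BL Gamma (eta t))^T *m om t.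
have Deta := Dent_of (Heta t It).
have Dx := Dent_sub (Dent_of Hdom) (Dent_cst omb t).
have DQ := Dent_mul (Dent_mul (Dent_tr Dx) (Dent_cst M t)) Dx.
have DC := Dent_mul (Dent_cst ((ones R m)^T *m Gamma) t)
  (Dent_map (fun x => @is_derive_cos R x) Deta).
have DL := Dent_mul (Dent_cst ((Gamma *m vsin etab)^T) t)
  (Dent_sub Deta (Dent_cst etab t)).
have Dc := Dent_cst ((ones R m)^T *m Gamma *m vcos etab) t.
have DW := Dent_sub (Dent_add (Dent_sub (Dent_scale (2^-1) DQ) DC) Dc) DL.
have -> : (fun s => Wfun M Gamma etab omb (eta s) (om s)) = (fun s =>
   (2^-1 *: ((om s - omb)^T *m M *m (om s - omb))
    - (ones R m)^T *m Gamma *m vcos (eta s)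
    + (ones R m)^T *m Gamma *m vcos etab
    - (Gamma *m vsin etab)^T *m (eta s - etab)) 0 0).
  apply/funext => s; rewrite /Wfun [RHS]scE.
  by rewrite scB scD scB scZ.
apply: (is_derive_eq (DW 0 0)).
rewrite [LHS]scE.
rewrite scB scD scB scZ sc0 !mul0mx !add0r !subr0 !mulmx0 !addr0.
rewrite -/D.
set x := om t - omb.
set sv := vsin (eta t).
set sb := vsin etab.
have E1 : sc (dom^T *m M *m x) = sc (x^T *m M *m dom).
  by rewrite -scT !trmx_mul trmxK Em tr_diag_mx mulmxA.
have E2 : sc ((ones R m)^T *m Gamma *m
     \matrix_(i, j) (- sin (eta t i j) * D i j)) = - sc ((Gamma *m sv)^T *m D).
  rewrite /sc Eg mul_mx_diag mul_diag_mx !mxE -sumrN; apply: eq_bigr => k _.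
  by rewrite !mxE; ring.
have Hd : BL *m (Gamma *m (sv - sb)) = 0.
  by rewrite mulmxA mulmxBr Hinv // subrr.
have Hrow : (ones R (ng + nl))^T = row_mx (ones R ng)^T (ones R nl)^T.
  apply/matrixP => i j; rewrite mxE [in RHS]mxE; case: splitP => k _; by rewrite !mxE.
have H1B : (ones R ng)^T *m BG = - ((ones R nl)^T *m BL).
  have := ones_B Hinc; rewrite Hrow -{1}(vsubmxK B) mul_row_col -/BG -/BL.
  by move/eqP; rewrite addr_eq0 => /eqP.
have E3 : sc ((Gamma *m sv)^T *m D) - sc ((Gamma *m sb)^T *m D)
    = sc (x^T *m (BG *m (Gamma *m (sv - sb)))).
  rewrite -scB -mulmxBl -linearB /= -mulmxBr -scT trmx_mul trmxK /D trmx_mul trmxK.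
  rewrite -mulmxA.
  have -> : B_S BG BL Gamma (eta t) *m (Gamma *m (sv - sb)) = BG *m (Gamma *m (sv - sb)).
    rewrite /B_S /= -mulmxA mulmxBl mul1mx -!mulmxA Hd !mulmx0 subr0 //.
  have -> : om t = x + omb by rewrite /x subrK.
  rewrite linearD /= mulmxDl scD.
  suff -> : omb^T *m (BG *m (Gamma *m (sv - sb))) = 0 by rewrite sc0 addr0.
  rewrite /omb linearZ /= -scalemxAl mulmxA H1B mulNmx -mulmxA Hd mulmx0 oppr0 scaler0 //.
have Eub : ubar = A *m omb + BG *m Gamma *m sb.
  apply/eqP; rewrite -subr_eq0 opprD addrC; apply/eqP; exact: esym Hub.
have Eom : x + omb = om t by rewrite /x subrK.
have Hq : sc (x^T *m M *m dom) =
    sc (x^T *m (- (A *m (x + omb)) - BG *m Gamma *m sv + u t)).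
  by rewrite Eom -mulmxA HMdom.
rewrite scD E1 E2 Eub.
move: Hq E3; clearbody x sv sb D.
rewrite !mulmxDr !mulmxN ?mulmxBr !mulmxA !scD !scN ?scB.
move=> Hq E3.
rewrite mulmxDr scD !mulmxA.
rewrite mulmxDr scD !mulmxA in Hq.
lra.
Qed.
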